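(* Let $\mathbf A=(A_{i,j})_{p\times p}$, $\mathbf Y=(Y_{i,j})_{p\times p}$, $k\ge2$, $\tau_1,\dots,\tau_k\in\{0,1\}$, $\mathcal V$, $C_{\mathcal V}$, $\varphi_\ell$ and $\aleph_{\mathcal V}$ be as in the context, with $\alpha,\beta$ known, and define \[ \widetilde C_{\mathcal V}=\frac{1}{(1-\alpha-\beta)^k}\cdot\frac{1}{|\mathcal V|}\sum_{\mathbf v=(i_1,i_1',\dots,i_k,i_k')\in\mathcal V}\prod_{\ell=1}^k\varphi_\ell(Y_{i_\ell,i_\ell'}). \] If $|1-\alpha-\beta|\ge c$ for some positive constant $c$, then as $p\to\infty$, \[ |\widetilde C_{\mathcal V}-C_{\mathcal V}|=O_p\Big(\sqrt{\aleph_{\mathcal V}/|\mathcal V|}\Big). \]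
   Context: $\mathbf A$ is a deterministic (unknown) symmetric $\{0,1\}$-valued $p\times p$ matrix with zero diagonal (adjacency matrix of a simple undirected graph on $\{1,\dots,p\}$). $\mathbf Y$ is symmetric with zero diagonal and $Y_{i,j}=A_{i,j}I(\varepsilon_{i,j}=0)+I(\varepsilon_{i,j}=1)$ for $i\neq j$, where $\varepsilon_{i,j}=\varepsilon_{j,i}$, $\mathbb P(\varepsilon_{i,j}=1)=\alpha$, $\mathbb P(\varepsilon_{i,j}=0)=1-\alpha-\beta$, $\mathbb P(\varepsilon_{i,j}=-1)=\beta$ for all $i<j$, and $\{\varepsilon_{i,j}\}_{i<j}$ are independent. $\mathcal V$ is a nonempty set of tuples $(i_1,i_1',\dots,i_k,i_k')\in\{1,\dots,p\}^{2k}$ such that $i_\ell\ne i_\ell'$ for each $\ell$ and $|\{i_{\ell_1},i_{\ell_1}'\}\cap\{i_{\ell_2},i_{\ell_2}'\}|\le1$ for all $\ell_1\ne\ell_2$ (possibly with further restrictions, e.g. encoding a subgraph). The subgraph density is $C_{\mathcal V}=\frac{1}{|\mathcal V|}\sum_{\mathbf v\in\mathcal V}\prod_{\ell=1}^kA_{i_\ell,i_\ell'}^{\tau_\ell}(1-A_{i_\ell,i_\ell'})^{1-\tau_\ell}$ with the convention $0^0=1$. $\varphi_\ell(x)=(x-\alpha)^{\tau_\ell}(1-\beta-x)^{1-\tau_\ell}$. For $\mathbf v\in\mathcal V$ and $1\le\ell_1<\dots<\ell_s\le k$ ($1\le s\le k-1$), $\mathcal G_{\ell_1,\dots,\ell_s}(\mathbf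 v)$ is the set of $(\theta_1,\theta_1',\dots,\theta_s,\theta_s')$ such that the tuple obtained from $\mathbf v$ by replacing the pair $(i_{\ell_r},i_{\ell_r}')$ by $(\theta_r,\theta_r')$ for each $r=1,\dots,s$ lies in $\mathcal V$. $\aleph_{\mathcal V}(s)=\max_{\mathbf v\in\mathcal V}\max_{1\le\ell_1<\dots<\ell_s\le k}|\mathcal G_{\ell_1,\dots,\ell_s}(\mathbf v)|$ and $\aleph_{\mathcal V}=\max_{1\le s\le k-1}\aleph_{\mathcal V}(s)$. Asymptotics are as $p\to\infty$ with $\mathbf A$, $\mathcal V$ (and possibly $\alpha,\beta$) depending on $p$, while $k$ and $\tau_1,\dots,\tau_k$ are fixed. *)

(* Defs.v *)
From HB Require Import structures.
From mathcomp Require Import all_boot all_order all_algebra.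
From mathcomp Require Import reals.
Set Implicit Arguments. Unset Strict Implicit. Unset Printing Implicit Defensive.
Import Order.TTheory GRing.Theory Num.Theory.
Local Open Scope ring_scope.

(* Unordered pairs {i,j} with i < j, indexing the independent noises eps_{i,j}. *)
Definition upair (p : nat) := {x : 'I_p * 'I_p | (x.1 < x.2)%N}.

Definition eps_val (e : 'I_3) : int :=
  match nat_of_ord e with 0%N => 0%Z | 1%N => 1%Z | _ => (-1)%Z end.

Definition noise (p : nat) := {ffun upair p -> 'I_3}.

Section Model.
Variables (R : realType) (p : nat).

Definition eps_weight (alpha beta : R) (e : 'I_3) : R :=
  if eps_val e == 1%Z then alpha
  else if eps_val e == 0%Z then 1 - alpha - beta else beta.

Definition Prob (alpha beta : R) (E : pred (noise p)) : R :=
  \sum_(w : noise p | E w) \prod_(e : upair p) eps_weight alpha beta (w e).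

(* eps_{i,j} = eps_{j,i} (value for i = j is irrelevant, diagonal of Y is 0). *)
Definition eps_of (w : noise p) (i j : 'I_p) : 'I_3 :=
  match insub (i, j) : option (upair p) with
  | Some u => w u
  | None => match insub (j, i) : option (upair p) with
            | Some u => w u
            | None => ord0
            end
  end.

Definition Aval (A : 'I_p -> 'I_p -> bool) (i j : 'I_p) : R := (A i j : nat)%:R.

Definition Yval (A : 'I_p -> 'I_p -> bool) (w : noise p) (i j : 'I_p) : R :=
  if i == j then 0
  else Aval A i j * (eps_val (eps_of w i j) == 0%Z)%:R
       + (eps_val (eps_of w i j) == 1%Z)%:R.

Variable k : nat.
(* A tuple (i_1,i_1',...,i_k,i_k') is encoded as v : 'I_k -> 'I_p * 'I_p,
   with v l = (i_l, i_l'). *)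
Definition tup := {ffun 'I_k -> 'I_p * 'I_p}.

Definition admissible (V : {set tup}) : Prop :=
  V != set0 /\
  forall v, v \in V ->
    (forall l, (v l).1 != (v l).2) /\
    (forall l1 l2, l1 != l2 ->
       (#|[set (v l1).1; (v l1).2] :&: [set (v l2).1; (v l2).2]| <= 1)%N).

Definition C_V (tau : 'I_k -> bool) (A : 'I_p -> 'I_p -> bool) (V : {set tup}) : R :=
  (#|V|%:R)^-1 * \sum_(v in V) \prod_(l < k)
     (Aval A (v l).1 (v l).2 ^+ tau l * (1 - Aval A (v l).1 (v l).2) ^+ (1 - tau l)).

Definition phi (tau : 'I_k -> bool) (alpha beta : R) (l : 'I_k) (x : R) : R :=
  (x - alpha) ^+ tau l * (1 - beta - x) ^+ (1 - tau l).

Definition Ctilde (tau : 'I_k -> bool) (alpha beta : R) (A : 'I_p -> 'I_p -> bool)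
    (V : {set tup}) (w : noise p) : R :=
  ((1 - alpha - beta) ^+ k)^-1 * ((#|V|%:R)^-1 *
   \sum_(v in V) \prod_(l < k) phi tau alpha beta l (Yval A w (v l).1 (v l).2)).

End Model.

Definition replace (p k s : nat) (v : tup p k) (ell : {ffun 'I_s -> 'I_k})
    (theta : {ffun 'I_s -> 'I_p * 'I_p}) : tup p k :=
  [ffun j => if [pick r | ell r == j] is Some r then theta r else v j].

Definition strictly_increasing (s k : nat) (ell : {ffun 'I_s -> 'I_k}) : bool :=
  [forall r1 : 'I_s, forall r2 : 'I_s, (r1 < r2)%N ==> (ell r1 < ell r2)%N].

Definition Gset (p k s : nat) (V : {set tup p k}) (v : tup p k)
    (ell : {ffun 'I_s -> 'I_k}) : {set {ffun 'I_s -> 'I_p * 'I_p}} :=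
  [set theta | replace v ell theta \in V].

Definition aleph_s (p k : nat) (V : {set tup p k}) (s : nat) : nat :=
  \max_(v in V) \max_(ell : {ffun 'I_s -> 'I_k} | strictly_increasing ell)
     #|Gset V v ell|.

Definition aleph (p k : nat) (V : {set tup p k}) : nat :=
  \max_(1 <= s < k) aleph_s V s.

(* Main.v *)
Require Import Defs.
From HB Require Import structures.
From mathcomp Require Import all_boot all_order all_algebra.
From mathcomp Require Import reals zify ring lra.
Import Order.TTheory GRing.Theory Num.Theory.
Local Open Scope ring_scope.
Set Implicit Arguments. Unset Strict Implicit. Unset Printing Implicit Defensive.

Section ProbSec.
Variables (R : realType) (p : nat) (a b : R).
Hypotheses (ha : 0 <= a) (hb : 0 <= b) (hab : a + b <= 1).

Definition mu (w : noise p) : R := \prod_(e : upair p) eps_weight a b (w e).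
Definition Ex (f : noise p -> R) : R := \sum_w mu w * f w.

Lemma wt_ge0 j : 0 <= eps_weight a b j.
Proof.
have ha' := ha; have hb' := hb; have hab' := hab.
rewrite /eps_weight; case: ifP => _; [idtac|case: ifP => _]. all: lra.
Qed.

Lemma wt_sum : \sum_(j : 'I_3) eps_weight a b j = 1.
Proof.
rewrite !big_ord_recr big_ord0 /= /eps_weight /=; ring.
Qed.

Lemma mu_ge0 w : 0 <= mu w.
Proof. by apply: prodr_ge0 => e _; apply: wt_ge0. Qed.

Lemma mu_sum : \sum_w mu w = 1.
Proof.
rewrite /mu -(bigA_distr_bigA (fun (e : upair p) (j : 'I_3) => eps_weight a b j)) /=.
by rewrite big1 // => e _; apply: wt_sum.
Qed.

Lemma Ex_const x : Ex (fun _ => x) = x.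
Proof. by rewrite /Ex -mulr_suml mu_sum mul1r. Qed.

Lemma Ex_sum (I : finType) (P : pred I) (F : I -> noise p -> R) :
  Ex (fun w => \sum_(i | P i) F i w) = \sum_(i | P i) Ex (F i).
Proof.
rewrite /Ex; under eq_bigr do rewrite mulr_sumr.
by rewrite exchange_big.
Qed.

Lemma Ex_scale x f : Ex (fun w => x * f w) = x * Ex f.
Proof. rewrite /Ex mulr_sumr; apply: eq_bigr => w _; ring. Qed.

Lemma Ex_le f g : (forall w, f w <= g w) -> Ex f <= Ex g.
Proof.
move=> H; rewrite /Ex; apply: ler_sum => w _.
by apply: ler_wpM2l; [apply: mu_ge0 | apply: H].
Qed.

Lemma Ex_norm1 f : (forall w, `|f w| <= 1) -> `|Ex f| <= 1.
Proof.
move=> H; rewrite /Ex; apply: le_trans (ler_norm_sum _ _ _) _.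
rewrite -mu_sum; apply: ler_sum => w _.
rewrite normrM ger0_norm ?mu_ge0 //.
rewrite -{2}(mulr1 (mu w)); apply: ler_wpM2l; [apply: mu_ge0 | apply: H].
Qed.

Lemma Ex_cov f g x y :
  Ex (fun w => (f w - x) * (g w - y)) =
  Ex (fun w => f w * g w) - x * Ex g - y * Ex f + x * y.
Proof.
rewrite /Ex.
have -> : \sum_w mu w * ((f w - x) * (g w - y)) =
   \sum_w (mu w * (f w * g w) - x * (mu w * g w) - y * (mu w * f w) + x * y * mu w).
  by apply: eq_bigr => w _; ring.
rewrite big_split /= !sumrB -!mulr_sumr mu_sum; ring.
Qed.

Lemma prod_reindex (L : finType) (ed : L -> upair p) (K : upair p -> R) :
  injective ed -> (forall e, e \notin [set ed l | l in [set: L]] -> K e = 1) ->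
  \prod_e K e = \prod_l K (ed l).
Proof.
move=> inj HK.
rewrite (bigID (mem [set ed l | l in [set: L]])) /=.
rewrite [X in _ * X]big1 ?mulr1; last by move=> e He; apply: HK.
rewrite big_imset /=; last by move=> x y _ _; apply: inj.
by apply: eq_bigl => l; rewrite in_setT.
Qed.

Lemma Ex_prod (L : finType) (ed : L -> upair p) (F : L -> 'I_3 -> R) :
  injective ed ->
  Ex (fun w => \prod_l F l (w (ed l))) = \prod_l \sum_j eps_weight a b j * F l j.
Proof.
move=> inj.
pose G (e : upair p) (j : 'I_3) :=
  if [pick l | ed l == e] is Some l then F l j else 1.
have GE l j : G (ed l) j = F l j.
  rewrite /G; case: pickP => [l' /eqP/inj -> // | /(_ l)]; by rewrite eqxx.
have Gout e j : e \notin [set ed l | l in [set: L]] -> G e j = 1.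
  move=> He; rewrite /G; case: pickP => // l /eqP El.
  by move: He; rewrite -El imset_f // in_setT.
have step1 w : \prod_l F l (w (ed l)) = \prod_e G e (w e).
  rewrite (@prod_reindex L ed (fun e => G e (w e))) //.
    by apply: eq_bigr => l _; rewrite GE.
  by move=> e He; apply: Gout.
rewrite /Ex.
transitivity (\sum_(w : noise p) \prod_e (eps_weight a b (w e) * G e (w e))).
  by apply: eq_bigr => w _; rewrite step1 /mu -big_split.
rewrite -(bigA_distr_bigA (fun (e : upair p) (j : 'I_3) => eps_weight a b j * G e j)) /=.
rewrite (@prod_reindex L ed) //.
  by apply: eq_bigr => l _; apply: eq_bigr => j _; rewrite GE.
move=> e He; under eq_bigr do rewrite Gout // mulr1.
exact: wt_sum.
Qed.

End ProbSec.

Section Model2.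
Variables (R : realType) (p k : nat) (a b : R).
Hypotheses (ha : 0 <= a) (hb : 0 <= b) (hab : a + b <= 1).
Variables (A : 'I_p -> 'I_p -> bool) (tau : 'I_k -> bool).

Definition edge (i j : 'I_p) : option (upair p) :=
  match (insub (i, j) : option (upair p)) with
  | Some u => Some u | None => insub (j, i) end.

Definition Yf (i j : 'I_p) (e : 'I_3) : R :=
  Aval R A i j * (eps_val e == 0%Z)%:R + (eps_val e == 1%Z)%:R.

Lemma eps_of_edge w i j u : edge i j = Some u -> eps_of w i j = w u.
Proof.
rewrite /eps_of /edge; case: (insub (i, j)) => [u'|]; first by case=> ->.
by case: (insub (j, i)) => [u'|] //; case=> ->.
Qed.

Definition swap (x : 'I_p * 'I_p) := (x.2, x.1).

Lemma edge_val (x : 'I_p * 'I_p) u : edge x.1 x.2 = Some u -> val u = x \/ val u = swap x.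
Proof.
case: x => i j /=; rewrite /edge.
case: insubP => [u' _ Hv [<-] | _]; first by left.
by case: insubP => [u' _ Hv [<-] | _ //]; right.
Qed.

Lemma edge_some i j : i != j -> exists u, edge i j = Some u.
Proof.
move=> Hij; rewrite /edge.
case: insubP => [u _ _ | Hn]; first by exists u.
case: insubP => [u _ _ | Hn']; first by exists u.
move: Hij Hn Hn'; rewrite -val_eqE /= -!leqNgt => H1 H2 H3.
by move: H1; rewrite eqn_leq H2 H3.
Qed.

Lemma Yval_edge w i j u : i != j -> edge i j = Some u -> Yval R A w i j = Yf i j (w u).
Proof. by move=> Hij He; rewrite /Yval (negbTE Hij) (eps_of_edge w He). Qed.

Lemma phi_mean l i j :
  \sum_(e : 'I_3) eps_weight a b e * phi tau a b l (Yf i j e) =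
  (1 - a - b) * (Aval R A i j ^+ tau l * (1 - Aval R A i j) ^+ (1 - tau l)).
Proof.
rewrite !big_ord_recr big_ord0 /= /eps_weight /Yf /phi /=.
case: (tau l) => /=; ring.
Qed.

Lemma phi_bound l y : (y = 0 \/ y = 1) -> `|phi tau a b l y| <= 1.
Proof.
have ha' := ha; have hb' := hb; have hab' := hab.
rewrite /phi; case: (tau l) => /=; rewrite ?expr1 ?expr0 ?mulr1 ?mul1r;
  case=> ->; rewrite ler_norml; apply/andP; split; lra.
Qed.

Lemma Yval01 w i j : Yval R A w i j = 0 \/ Yval R A w i j = 1.
Proof.
rewrite /Yval; case: eqP => _; first by left.
rewrite /Aval; set e := eps_val _.
case E0: (e == 0%Z); case E1: (e == 1%Z).
- by move: E1; rewrite (eqP E0).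
- by case: (A i j) => /=; rewrite ?mulr1 ?addr0; [right|left].
- by right; rewrite mulr0 add0r.
- by left; rewrite mulr0 add0r.
Qed.

Definition T (v : tup p k) (w : noise p) : R :=
  \prod_(l < k) phi tau a b l (Yval R A w (v l).1 (v l).2).

Definition av (v : tup p k) : R :=
  \prod_(l < k) (Aval R A (v l).1 (v l).2 ^+ tau l * (1 - Aval R A (v l).1 (v l).2) ^+ (1 - tau l)).

Definition m (v : tup p k) : R := (1 - a - b) ^+ k * av v.

Lemma T_bound v w : `|T v w| <= 1.
Proof.
rewrite /T normr_prod; apply: prodr_ile1 => l _; rewrite ?normr_ge0 //=.
by apply: phi_bound; apply: Yval01.
Qed.

End Model2.

Section Model3.
Variables (R : realType) (p k : nat) (a b : R).
Hypotheses (ha : 0 <= a) (hb : 0 <= b) (hab : a + b <= 1).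
Variables (A : 'I_p -> 'I_p -> bool) (tau : 'I_k -> bool) (V : {set tup p k}).
Hypothesis admV : admissible V.

Lemma set_of_edge (x : 'I_p * 'I_p) u : edge x.1 x.2 = Some u ->
  [set x.1; x.2] = [set (val u).1; (val u).2].
Proof. by case/edge_val => ->; rewrite //= setUC. Qed.

Lemma card_edge (u : upair p) : #|[set (val u).1; (val u).2]| = 2%N.
Proof.
rewrite cards2; have := valP u; case: eqP => // ->; by rewrite ltnn.
Qed.

Lemma edges_exist v : v \in V -> exists ed : 'I_k -> upair p,
  (forall l, edge (v l).1 (v l).2 = Some (ed l)) /\ injective ed.
Proof.
move=> vV; case: admV => _ /(_ v vV) [Hd Hi].
have [ed Hed] : exists ed : 'I_k -> upair p, forall l, edge (v l).1 (v l).2 = Some (ed l).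
  apply: (@fin_all_exists _ (fun _ => upair p) (fun l u => edge (v l).1 (v l).2 = Some u)).
  by move=> l; apply: edge_some.
exists ed; split => // l1 l2 E.
apply/eqP; apply/negPn/negP => Hne.
have := Hi l1 l2 Hne.
rewrite (set_of_edge (Hed l1)) (set_of_edge (Hed l2)) E setIid card_edge.
by [].
Qed.

Lemma Ex_ext (f g : noise p -> R) : (forall w, f w = g w) -> Ex a b f = Ex a b g.
Proof. by move=> H; apply: eq_bigr => w _; rewrite H. Qed.

Lemma T_edges v ed w : v \in V -> (forall l, edge (v l).1 (v l).2 = Some (ed l)) ->
  T a b A tau v w = \prod_l phi tau a b l (Yf R A (v l).1 (v l).2 (w (ed l))).
Proof.
move=> vV Hed; apply: eq_bigr => l _.
rewrite (Yval_edge _ _ _ _ (Hed l)) //.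
by case: admV => _ /(_ v vV) [Hd _].
Qed.

Lemma ET v : v \in V -> Ex a b (T a b A tau v) = m a b A tau v.
Proof.
move=> vV; have [ed [Hed inj]] := edges_exist vV.
rewrite (Ex_ext (fun w => T_edges w vV Hed)).
rewrite (Ex_prod a b (fun l j => phi tau a b l (Yf R A (v l).1 (v l).2 j)) inj).
under eq_bigr do rewrite phi_mean.
by rewrite big_split /= prodr_const card_ord.
Qed.


Definition share (v v' : tup p k) : bool :=
  [exists l, exists l', edge (v l).1 (v l).2 == edge (v' l').1 (v' l').2].

Lemma ETT v v' : v \in V -> v' \in V -> ~~ share v v' ->
  Ex a b (fun w => T a b A tau v w * T a b A tau v' w) = m a b A tau v * m a b A tau v'.
Proof.
move=> vV v'V Hns.
have [ed [Hed inj]] := edges_exist vV; have [ed' [Hed' inj']] := edges_exist v'V.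
pose ed2 (x : 'I_k + 'I_k) := match x with inl l => ed l | inr l => ed' l end.
pose F2 (x : 'I_k + 'I_k) j := match x with
  | inl l => phi tau a b l (Yf R A (v l).1 (v l).2 j)
  | inr l => phi tau a b l (Yf R A (v' l).1 (v' l).2 j) end.
have inj2 : injective ed2.
  case=> [l1|l1] [l2|l2] /= E.
  - by rewrite (inj _ _ E).
  - exfalso; move/negP: Hns; apply; apply/existsP; exists l1; apply/existsP; exists l2.
    by rewrite Hed Hed' E.
  - exfalso; move/negP: Hns; apply; apply/existsP; exists l2; apply/existsP; exists l1.
    by rewrite Hed Hed' E.
  - by rewrite (inj' _ _ E).
rewrite (@Ex_ext _ (fun w => \prod_x F2 x (w (ed2 x)))); last first.
  by move=> w; rewrite big_sumType /= (T_edges w vV Hed) (T_edges w v'V Hed').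

apply: etrans (Ex_prod a b F2 inj2) _; rewrite big_sumType /=.
rewrite -(ET vV) -(ET v'V) (Ex_ext (fun w => T_edges w vV Hed)).
rewrite (Ex_ext (fun w => T_edges w v'V Hed')).
rewrite (Ex_prod a b (fun l j => phi tau a b l (Yf R A (v l).1 (v l).2 j)) inj).
by rewrite (Ex_prod a b (fun l j => phi tau a b l (Yf R A (v' l).1 (v' l).2 j)) inj').
Qed.

Lemma m_bound v : v \in V -> `|m a b A tau v| <= 1.
Proof. by move=> vV; rewrite -(ET vV); apply: (Ex_norm1 ha hb hab) => w; exact: (T_bound ha hb hab). Qed.

Lemma pair_bound v v' : v \in V -> v' \in V ->
  Ex a b (fun w => (T a b A tau v w - m a b A tau v) * (T a b A tau v' w - m a b A tau v'))
  <= 2 * (share v v')%:R.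
Proof.
move=> vV v'V; rewrite Ex_cov (ET vV) (ET v'V).
case: (boolP (share v v')) => Hs; last first.
  by rewrite (ETT vV v'V Hs) /= mulr0; lra.
have h1 : `|Ex a b (fun w => T a b A tau v w * T a b A tau v' w)| <= 1.
  apply: (Ex_norm1 ha hb hab) => w; rewrite normrM; apply: mulr_ile1; rewrite ?normr_ge0 //; exact: (T_bound ha hb hab).
have h4 : `|m a b A tau v * m a b A tau v'| <= 1.
  by rewrite normrM; apply: mulr_ile1; rewrite ?normr_ge0 //; apply: m_bound.
move: h1 h4; rewrite !ler_norml => /andP [h1 h2] /andP [h3 h4] /=.
rewrite mulr1; lra.
Qed.

Lemma le_sum_term (I : finType) (F : I -> R) i : (forall j, 0 <= F j) -> F i <= \sum_j F j.
Proof. by move=> H; rewrite (bigD1 i) //= lerDl sumr_ge0. Qed.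

Lemma swapK (x : 'I_p * 'I_p) : swap (swap x) = x. Proof. by case: x. Qed.

Lemma share_le v v' : v \in V -> v' \in V ->
  ((share v v')%:R : R) <= \sum_l \sum_l'
     (((v' l' == v l) : nat)%:R + ((v' l' == swap (v l)) : nat)%:R).
Proof.
move=> vV v'V.
have G0 : forall l l', 0 <= (((v' l' == v l) : nat)%:R + ((v' l' == swap (v l)) : nat)%:R : R).
  by move=> l l'; rewrite addr_ge0.
case: (boolP (share v v')) => [/existsP [l /existsP [l' /eqP E]] | _]; last first.
  by rewrite sumr_ge0 // => l _; rewrite sumr_ge0.
have [ed [Hed _]] := edges_exist vV.
have [ed' [Hed' _]] := edges_exist v'V.
rewrite Hed Hed' in E; case: E => E.
have h1 := edge_val (Hed l); have h2 := edge_val (Hed' l').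
rewrite -E in h2.
have : (v' l' == v l) || (v' l' == swap (v l)).
  case: h1 => h1; case: h2 => h2.
  - by rewrite -h1 -h2 eqxx.
  - by rewrite -h1 h2 swapK eqxx orbT.
  - by rewrite -h2 h1 eqxx orbT.
  - by rewrite -(swapK (v' l')) -h2 h1 swapK eqxx.
move=> H.
apply: le_trans (le_sum_term l (fun l => sumr_ge0 _ (fun l' _ => G0 l l'))).
apply: le_trans (le_sum_term l' (fun l' => G0 l l')).
case/orP: H => /eqP ->; rewrite eqxx /=.
- by rewrite lerDl ler0n.
- by rewrite lerDr ler0n.
Qed.

Lemma count_le (l' : 'I_k) (x : 'I_p * 'I_p) : (1 < k)%N ->
  (#|[set v' in V | v' l' == x]| <= aleph V)%N.
Proof.
move=> hk.
set S := [set v' in V | v' l' == x].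
case: (set_0Vmem S) => [-> | [u Hu]]; first by rewrite cards0.
move: Hu; rewrite inE => /andP [uV /eqP ux].
pose ell : {ffun 'I_k.-1 -> 'I_k} := [ffun r => lift l' r].
pose f (v' : tup p k) : {ffun 'I_k.-1 -> 'I_p * 'I_p} := [ffun r => v' (lift l' r)].
have rep : forall v' : tup p k, v' l' = x -> replace u ell (f v') = v'.
  move=> v' vx; apply/ffunP => j; rewrite /replace !ffunE.
  case: pickP => [r /eqP | Hn].
    by rewrite ffunE => <-; rewrite ffunE.
  case: (unliftP l' j) => [r Hj | Hj].
    by move: (Hn r); rewrite ffunE Hj eqxx.
  by rewrite Hj ux vx.
have inj : {in S &, injective f}.
  move=> v1 v2; rewrite !inE => /andP[_ /eqP h1] /andP[_ /eqP h2] E.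
  by rewrite -(rep _ h1) -(rep _ h2) E.
rewrite -(card_in_imset inj).
apply: leq_trans (_ : #|Gset V u ell| <= _)%N.
  apply: subset_leq_card; apply/subsetP => t /imsetP [v' Hv' ->].
  move: Hv'; rewrite inE => /andP [v'V /eqP v'x].
  by rewrite /Gset inE rep.
apply: leq_trans (_ : aleph_s V k.-1 <= _)%N.
  rewrite /aleph_s.
  apply: leq_trans (_ : \max_(ell0 : {ffun 'I_k.-1 -> 'I_k} | strictly_increasing ell0)
                            #|Gset V u ell0| <= _)%N.
    apply: (leq_bigmax_cond (F := fun ell0 => #|Gset V u ell0|)).
    apply/forallP => r1; apply/forallP => r2; apply/implyP => h.
    rewrite !ffunE /= /bump.
    case: (leqP l' r1); case: (leqP l' r2) => /=; lia.
  exact: (leq_bigmax_cond (F := fun v => \max_(ell0 : {ffun 'I_k.-1 -> 'I_k} | strictly_increasing ell0)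
                            #|Gset V v ell0|)).
rewrite /aleph; apply: (leq_bigmax_seq (F := aleph_s V)) => //.
rewrite mem_index_iota; lia.
Qed.

Lemma count_sum (l' : 'I_k) (x : 'I_p * 'I_p) : (1 < k)%N ->
  \sum_(v' in V) (((v' l' == x) : nat)%:R : R) <= (aleph V)%:R.
Proof.
move=> hk; rewrite -natr_sum ler_nat.
apply: leq_trans (count_le l' x hk).
rewrite -sum1_card.
rewrite big_mkcond /= [X in (_ <= X)%N]big_mkcond /=.
apply: leq_sum => v' _; rewrite !inE.
by case: (v' \in V); case: (v' l' == x).
Qed.

Lemma var_bound : (1 < k)%N ->
  Ex a b (fun w => (\sum_(v in V) (T a b A tau v w - m a b A tau v)) ^+ 2)
  <= #|V|%:R * (4 * (k%:R) ^+ 2 * (aleph V)%:R).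
Proof.
move=> hk.
rewrite (@Ex_ext _ (fun w => \sum_(v in V) \sum_(v' in V)
   ((T a b A tau v w - m a b A tau v) * (T a b A tau v' w - m a b A tau v')))); last first.
  move=> w; rewrite expr2 mulr_suml; apply: eq_bigr => v _; by rewrite mulr_sumr.
rewrite Ex_sum.
apply: le_trans (_ : \sum_(v in V) (4 * (k%:R) ^+ 2 * (aleph V)%:R) <= _); last first.
  by rewrite sumr_const [X in _ <= X]mulr_natl.
apply: ler_sum => v vV; rewrite Ex_sum.
apply: le_trans (_ : \sum_(v' in V) (2 * ((share v v')%:R)) <= _).
  by apply: ler_sum => v' v'V; apply: pair_bound.
apply: le_trans (_ : \sum_(v' in V) (2 * \sum_l \sum_l'
     (((v' l' == v l) : nat)%:R + ((v' l' == swap (v l)) : nat)%:R)) <= _).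
  apply: ler_sum => v' v'V; apply: ler_wpM2l => //; exact: share_le.
rewrite -mulr_sumr exchange_big /=.
under eq_bigr do rewrite exchange_big /=.
apply: le_trans (_ : 2 * \sum_(l < k) \sum_(l' < k) ((aleph V)%:R + (aleph V)%:R) <= _).
  apply: ler_wpM2l => //; apply: ler_sum => l _; apply: ler_sum => l' _.
  by rewrite big_split /= lerD // count_sum.
rewrite !sumr_const !card_ord.
rewrite -[((aleph V)%:R + (aleph V)%:R) *+ k]mulr_natr -[(_ * k%:R) *+ k]mulr_natr.
rewrite le_eqVlt; apply/orP; left; apply/eqP; ring.
Qed.

End Model3.

Lemma cheb (R : realType) (p : nat) (a b : R) : 0 <= a -> 0 <= b -> a + b <= 1 ->
  forall (g : noise p -> R) (t : R), 0 < t ->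
  Prob a b (fun w => t < `|g w|) <= Ex a b (fun w => g w ^+ 2) / t ^+ 2.
Proof.
move=> ha hb hab g t ht.
rewrite /Prob /Ex mulr_suml big_mkcond /=; apply: ler_sum => w _.
have m0 : 0 <= mu a b w by apply: mu_ge0.
have t2 : 0 < t ^+ 2 by rewrite exprn_gt0.
case: ifP => H.
- rewrite -/(mu a b w) -mulrA; apply: ler_peMr => //.
  rewrite ler_pdivlMr // mul1r -(real_normK (num_real (g w))).
  have hg := normr_ge0 (g w); move: H => H. rewrite !expr2; nra.
- by rewrite -mulrA mulr_ge0 // divr_ge0 // sqr_ge0.
Qed.

Theorem proposition2 (R : realType) (k : nat) (tau : 'I_k -> bool)
    (A : forall p : nat, 'I_p -> 'I_p -> bool)
    (V : forall p : nat, {set tup p k})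
    (alpha beta : nat -> R) (c : R) (p0 : nat) :
  (2 <= k)%N ->
  0 < c ->
  (forall p, (p0 <= p)%N ->
     (forall i j : 'I_p, A p i j = A p j i) /\
     (forall i : 'I_p, A p i i = false) /\
     admissible (V p) /\
     0 <= alpha p /\ 0 <= beta p /\ alpha p + beta p <= 1 /\
     c <= `|1 - alpha p - beta p|) ->
  forall eps : R, 0 < eps ->
  exists M : R, 0 < M /\
  exists P0 : nat, forall p, (P0 <= p)%N ->
    Prob (alpha p) (beta p)
      (fun w : noise p =>
         M * Num.sqrt ((aleph (V p))%:R / (#|V p|)%:R)
           < `|Ctilde tau (alpha p) (beta p) (A p) (V p) w - C_V R tau (A p) (V p)|)
    <= eps.
Proof.
move=> hk hc Hyp eps heps.
pose Q : R := 4 * (k%:R) ^+ 2.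
have Q0 : 0 <= Q by rewrite mulr_ge0 // sqr_ge0.
have ck0 : 0 < c ^+ k by rewrite exprn_gt0.
pose K : R := Q / (c ^+ k) ^+ 2.
have K0 : 0 <= K by rewrite divr_ge0 // sqr_ge0.
pose x := K / eps.
have x0 : 0 <= x by rewrite divr_ge0 // ltW.
have ex : eps * x = K by rewrite /x mulrC divfK // gt_eqF.
pose M := x + 1.
have M1 : 1 <= M by rewrite /M; lra.
exists M; split; first by lra.
exists p0 => pp hp.
have [_ [_ [admV [ha [hb [hab hcd]]]]]] := Hyp pp hp.
set a := alpha pp in ha hb hab hcd *; set b := beta pp in ha hb hab hcd *.
set d := 1 - a - b.
have d0 : 0 <= d by rewrite /d; lra.
have cd : c <= d by move: hcd; rewrite ger0_norm.
have dpos : 0 < d by lra.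
have dk0 : 0 < d ^+ k by rewrite exprn_gt0.
set V0 := V pp in admV *.
have Vne : V0 != set0 by case: admV.
have [v vV] : exists v, v \in V0 by case: (set_0Vmem V0) Vne => [-> | [v Hv]] //; [rewrite eqxx | exists v].
have n0 : 0 < (#|V0|%:R : R) by rewrite ltr0n card_gt0.
have al1 : 1 <= ((aleph V0)%:R : R).
  rewrite ler1n.
  have k0 : (0 < k)%N by apply: ltn_trans hk.
  apply: leq_trans (count_le ha hb hab V0 (Ordinal k0) (v (Ordinal k0)) hk).
  by apply/card_gt0P; exists v; rewrite inE vV eqxx.
pose S w := \sum_(v in V0) (T a b (A pp) tau v w - m a b (A pp) tau v).
pose coef := (#|V0|%:R)^-1 * (d ^+ k)^-1.
have HD : forall w, Ctilde tau a b (A pp) V0 w - C_V R tau (A pp) V0 = coef * S w.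
  move=> w; rewrite /S sumrB.
  have -> : \sum_(v in V0) m a b (A pp) tau v = d ^+ k * \sum_(v in V0) av R (A pp) tau v.
    by rewrite mulr_sumr.
  rewrite /Ctilde /C_V /T /av /coef -/d.
  field; rewrite ?gt_eqF //.
pose al : R := (aleph V0)%:R.
pose n : R := (#|V0|%:R).
have an0 : 0 < al / n by rewrite divr_gt0 //; lra.
pose t := M * Num.sqrt (al / n).
have t0 : 0 < t by rewrite /t mulr_gt0 ?sqrtr_gt0 //; lra.
have t2 : t ^+ 2 = M ^+ 2 * (al / n) by rewrite /t exprMn sqr_sqrtr // ltW.
apply: le_trans (cheb ha hb hab
  (fun w => Ctilde tau a b (A pp) V0 w - C_V R tau (A pp) V0) t0) _.
rewrite (Ex_ext a b (g := fun w => coef ^+ 2 * S w ^+ 2)); last first.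
  by move=> w; rewrite HD exprMn.
rewrite Ex_scale.
have HV := var_bound ha hb hab (A pp) tau admV hk.
rewrite -/Q -/al -/n in HV.
have c20 : 0 <= coef ^+ 2 by apply: sqr_ge0.
apply: le_trans (_ : coef ^+ 2 * (n * (Q * al)) / t ^+ 2 <= _).
  rewrite ler_wpM2r // ?invr_ge0 ?sqr_ge0 //.
  by rewrite ler_wpM2l // mulrA.
have -> : coef ^+ 2 * (n * (Q * al)) / t ^+ 2 = Q / (d ^+ k) ^+ 2 / M ^+ 2.
  rewrite t2 /coef; field.
  by rewrite !gt_eqF //; lra.
apply: le_trans (_ : K / M ^+ 2 <= _).
  rewrite ler_wpM2r ?invr_ge0 ?sqr_ge0 // /K ler_wpM2l //.
  rewrite lef_pV2 ?posrE ?exprn_gt0 //.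
  have cn : c \in Num.nneg by rewrite nnegrE ltW.
  have dn : d \in Num.nneg by rewrite nnegrE.
  have h1 := lerXn2r k cn dn cd.
  have ckn : c ^+ k \in Num.nneg by rewrite nnegrE ltW.
  have dkn : d ^+ k \in Num.nneg by rewrite nnegrE ltW.
  exact: (lerXn2r 2 ckn dkn h1).
rewrite ler_pdivrMr ?exprn_gt0 ?(lt_le_trans ltr01 M1) //.
rewrite -ex /M; nra.
Qed.
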